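(* Let $p,p'\in(0,1/2)$ be constants with $p'<p$. For every two-sided $p$-error PACA $C$ with constant time complexity $T=O(1)$ there is a two-sided $p'$-error PACA $C'$ with time complexity $O(T)=O(1)$ such that $L(C)=L(C')$.
   Context: PACA: a bounded one-dimensional CA with state set $Q$, input alphabet $\Sigma\subseteq Q$, accepting states $A\subseteq Q$, boundary symbol $\$$ and two local transition functions $\delta_0,\delta_1$; at each step every cell independently tosses a fair coin $c$ and updates by $\delta_c$ applied to its left neighbor, itself and its right neighbor ($\$$ beyond borders). On input $x\in\Sigma^n$, a computation is accepting if at some step all cells are simultaneously in $A$. $C$ has time complexity $T$ if every accepting computation on inputs of length $n$ first reaches $A^n$ at a step $<T(n)$. For $p<1/2$, $C$ is a two-sided $p$-error PACA for $L$ if for every input $x$: $x\in L\iff\Pr[C\text{ accepts }x]\ge1-p$ and $x\notin L\iff\Pr[C\text{ accepts }x]\le p$; then $L(C)=L$. *)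

(* Defs.v *)
From HB Require Import structures.
From mathcomp Require Import all_boot all_order all_algebra.
From mathcomp Require Import classical_sets reals.
Set Implicit Arguments. Unset Strict Implicit. Unset Printing Implicit Defensive.
Import Order.TTheory GRing.Theory Num.Theory.
Local Open Scope classical_set_scope.
Local Open Scope ring_scope.

(* Sigma ⊆ Q is modelled by an
   injection inp : Sigma -> Q; the boundary symbol $ is modelled by None
   (neighbours are of type option Q); delta c is the local rule δ_c. *)
Record PACA (Sigma : finType) := MkPACA {
  st : finType;
  inp : Sigma -> st;
  inp_inj : injective inp;
  acc : pred st;
  delta : bool -> option st -> st -> option st -> st
}.

Section Dyn.
Variables (Sigma : finType) (C : PACA Sigma).

(* A configuration: cell i (i < n) holds Some q; outside cells are None ($). *)
Definition config := nat -> option (st C).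

Definition cfg0 (x : seq Sigma) : config := fun i => omap (@inp _ C) (onth x i).

Definition step (n : nat) (coins : nat -> bool) (c : config) : config :=
  fun i => if (i < n)%N then
             match c i with
             | Some q => Some (@delta _ C (coins i)
                                (if i is j.+1 then c j else None) q (c i.+1))
             | None => None
             end
           else None.

(* coins s i = coin of cell i at step s (the step from config s to s+1) *)
Fixpoint run (x : seq Sigma) (coins : nat -> nat -> bool) (t : nat) : config :=
  if t is s.+1 then step (size x) (coins s) (run x coins s) else cfg0 x.

Definition allA (n : nat) (c : config) : bool :=
  [forall i : 'I_n, if c i is Some q then @acc _ C q else false].

Definition accepts_at x coins t := allA (size x) (run x coins t).

Definition time_complexity (T : nat -> nat) : Prop :=
  forall x coins t, accepts_at x coins t ->
    exists2 t', (t' < T (size x))%N & accepts_at x coins t'.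

(* finite coin array for the first t steps, extended by false *)
Definition ext_coins t n (c : {ffun 'I_t * 'I_n -> bool}) : nat -> nat -> bool :=
  fun s i => match insub s, insub i with
             | Some s', Some i' => c (s', i')
             | _, _ => false
             end.

Definition good_coins (x : seq Sigma) (t : nat)
  : pred {ffun 'I_t * 'I_(size x) -> bool} :=
  fun c => [exists t' : 'I_t.+1, accepts_at x (ext_coins c) t'].

Definition acc_within (R : realType) (x : seq Sigma) (t : nat) : R :=
  (#|@good_coins x t|)%:R / (2 ^ (t * size x))%:R.

(* Pr[C accepts x]: probability of the increasing union of the events
   "accepts at some step <= t", i.e. the supremum over t. *)
Definition acc_prob (R : realType) (x : seq Sigma) : R :=
  sup (range (@acc_within R x)).

(* C is a two-sided p-error PACA for L (so L(C) = L). *)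
Definition two_sided (R : realType) (p : R) (L : seq Sigma -> Prop) : Prop :=
  forall x, (L x <-> 1 - p <= acc_prob R x) /\ (~ L x <-> acc_prob R x <= p).

End Dyn.

(* Main.v *)
Require Import Defs.
From HB Require Import structures.
From mathcomp Require Import all_boot all_order all_algebra.
From mathcomp Require Import classical_sets reals.
From mathcomp Require Import zify ring lra boolp.
Import Order.TTheory GRing.Theory Num.Theory.

Module MA.
Set Implicit Arguments. Unset Strict Implicit. Unset Printing Implicit Defensive.

Section Generic.
Variables (Sigma : finType) (C : PACA Sigma).

Lemma run_out x coins t i : (size x <= i)%N -> run C x coins t i = None.
Proof.
move=> hi; case: t => [|t] /=.
  by rewrite /cfg0 onth_default.
by rewrite /step ltnNge hi.
Qed.

Lemma run_in x coins t i : (i < size x)%N -> exists q, run C x coins t i = Some q.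
Proof.
move=> hi; elim: t => [|t [q IH]] /=.
  rewrite /cfg0; case E: (onth x i) => [a|] /=; first by exists (inp C a).
  by have := onthTE x i; rewrite E hi.
by rewrite /step hi IH; eexists.
Qed.

Lemma run_ext x c1 c2 t :
  (forall s i, (s < t)%N -> (i < size x)%N -> c1 s i = c2 s i) ->
  forall i, run C x c1 t i = run C x c2 t i.
Proof.
elim: t => [|t IH] H i //=.
have IH' := IH (fun s i hs hi => H s i (ltnW hs) hi).
rewrite /step; case: ifP => // hi.
rewrite !IH' H //; case: i hi => [|j] hi; rewrite ?IH' //.
Qed.

Lemma accepts_ext x c1 c2 t :
  (forall s i, (s < t)%N -> (i < size x)%N -> c1 s i = c2 s i) ->
  accepts_at C x c1 t = accepts_at C x c2 t.
Proof.
move=> H; rewrite /accepts_at /allA; apply: eq_forallb => i.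
by rewrite (run_ext H).
Qed.

End Generic.

Lemma card_marg (D E : finType) (g : E -> D) (Q : pred {ffun E -> bool}) :
  injective g ->
  #|[pred c : {ffun D -> bool} | Q [ffun e => c (g e)]]| = (#|Q| * 2 ^ (#|D| - #|E|))%N.
Proof.
move=> ginj.
pose F (e : {ffun E -> bool}) (d : D) : pred bool :=
  fun b => if [pick e' | g e' == d] is Some e' then b == e e' else true.
have famE e c : (c \in family (F e)) = ([ffun e' => c (g e')] == e).
  apply/familyP/eqP => [H | <-].
    apply/ffunP => e'; rewrite ffunE; have := H (g e'); rewrite /F /in_mem /=.
    case: pickP => [e'' /eqP /ginj -> /eqP //|/(_ e')]; by rewrite eqxx.
  move=> d; rewrite /F /in_mem /=; case: pickP => // e'' /eqP <-.
  by rewrite ffunE.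
have cardF e : #|family (F e)| = (2 ^ (#|D| - #|E|))%N.
  rewrite card_family foldrE big_map big_enum /=.
  rewrite (bigID (fun d => d \in codom g)) /=.
  rewrite big1 ?mul1n; last first.
    move=> d /codomP [e' ->]; rewrite /F; case: pickP => [e'' /eqP /ginj -> |/(_ e')];
      last by rewrite eqxx.
    by rewrite (eq_card (B := pred1 (e e'))) ?card1.
  rewrite (eq_bigr (fun _ => 2)); last first.
    move=> d dn; rewrite /F; case: pickP => [e'' /eqP Ed|_].
      by move: dn; rewrite -Ed codom_f.
    by rewrite (eq_card (B := predT)) // card_bool.
  rewrite prod_nat_const; congr (_ ^ _).
  rewrite -(card_codom ginj) -[X in (_ = X - _)%N](cardC (mem (codom g))).
  by rewrite addKn; apply: eq_card.
rewrite -sum1_card (partition_big (I := {ffun D -> bool}) (J := {ffun E -> bool}) (fun c : {ffun D -> bool} => [ffun e' => c (g e')]) Q) //=.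
rewrite -sum_nat_const; apply: eq_bigr => e Qe.
rewrite -(cardF e) -sum1_card; apply: eq_bigl => c.
by rewrite famE /in_mem /= andb_idl // => /eqP ->.
Qed.

End MA.
Import MA.

Module MB.
Set Implicit Arguments. Unset Strict Implicit. Unset Printing Implicit Defensive.
Local Open Scope ring_scope.

Lemma frac_eq (R : realType) (a A B : nat) :
  (a * 2 ^ B)%:R / (2 ^ (A + B))%:R = a%:R / (2 ^ A)%:R :> R.
Proof.
rewrite expnD !natrM; have h1 : (2 ^ A)%:R != 0 :> R by rewrite pnatr_eq0 expn_eq0.
have h2 : (2 ^ B)%:R != 0 :> R by rewrite pnatr_eq0 expn_eq0.
rewrite invfM mulrACA divff // mulr1 //.
Qed.

Lemma sup_max (R : realType) (f : nat -> R) t0 :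
  (forall t, f t <= f t0) -> sup (range f) = f t0.
Proof.
move=> H; apply/le_anti/andP; split.
  by apply: ge_sup; [exists (f t0), t0|move=> _ [t _ <-]].
by apply: ub_le_sup; [exists (f t0) => _ [t _ <-]|exists t0].
Qed.

Lemma ext_coinsE t n (c : {ffun 'I_t * 'I_n -> bool}) s i (hs : (s < t)%N) (hi : (i < n)%N) :
  ext_coins c s i = c (Ordinal hs, Ordinal hi).
Proof.
rewrite /ext_coins (insubT (fun s => s < t)%N hs) (insubT (fun i => i < n)%N hi) //.
Qed.

Definition gw t t' n (h : (t <= t')%N) (e : 'I_t * 'I_n) : 'I_t' * 'I_n :=
  (widen_ord h e.1, e.2).

Lemma gw_inj t t' n (h : (t <= t')%N) : injective (@gw t t' n h).
Proof.
move=> [a b] [c d] [] /= E ->; congr (_, _); apply/val_inj; exact: E.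
Qed.

Lemma ext_restr t t' n (h : (t <= t')%N) (c : {ffun 'I_t' * 'I_n -> bool}) s i :
  (s < t)%N -> (i < n)%N ->
  ext_coins [ffun e => c (gw h e)] s i = ext_coins c s i.
Proof.
move=> hs hi; rewrite (ext_coinsE _ hs hi) (ext_coinsE _ (leq_trans hs h) hi) ffunE.
by congr (c (_, _)); apply: val_inj.
Qed.

Section Mono.
Variables (Sigma : finType) (C : PACA Sigma) (R : realType).
Implicit Types x : seq Sigma.

Lemma card_restr x t t' (h : (t <= t')%N) (P : pred {ffun 'I_t * 'I_(size x) -> bool}) :
  #|[pred c : {ffun 'I_t' * 'I_(size x) -> bool} | P [ffun e => c (gw h e)]]|
  = (#|P| * 2 ^ (t' * size x - t * size x))%N.
Proof. by rewrite card_marg ?card_prod ?card_ord //; apply: gw_inj. Qed.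

Lemma acc_within_mono x t t' : (t <= t')%N -> acc_within C R x t <= acc_within C R x t'.
Proof.
move=> h; rewrite /acc_within.
have hm : (t * size x <= t' * size x)%N by rewrite leq_mul2r h orbT.
rewrite -(frac_eq R _ (t * size x) (t' * size x - t * size x)) subnKC //.
rewrite ler_wpM2r ?invr_ge0 ?ler0n // ler_nat -(card_restr h).
apply: subset_leq_card; apply/fintype.subsetP => c; rewrite !inE /good_coins /in_mem /=.
move=> /existsP [u hu]; apply/existsP.
have hut : (u <= t')%N by rewrite (leq_trans _ h) // -ltnS.
exists (Ordinal (hut : (u < t'.+1)%N)) => /=.
rewrite -(accepts_ext C (c1 := ext_coins [ffun e => c (gw h e)])) // => s i hs hi.
by rewrite ext_restr // (leq_trans hs) // -ltnS.
Qed.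

Lemma acc_within_tc x T : time_complexity C (fun _ => T.+1) ->
  forall t, acc_within C R x t <= acc_within C R x T.
Proof.
move=> tc t; case: (leqP t T) => h; first exact: acc_within_mono.
have h' : (T <= t)%N by apply: ltnW.
have hm : (T * size x <= t * size x)%N by rewrite leq_mul2r h' orbT.
rewrite /acc_within -(frac_eq R _ (T * size x) (t * size x - T * size x)) subnKC //.
rewrite ler_wpM2r ?invr_ge0 ?ler0n // ler_nat -(card_restr h').
apply: subset_leq_card; apply/fintype.subsetP => c; rewrite !inE /good_coins /in_mem /=.
move=> /existsP [u hu]; apply/existsP.
have [u' hu' hacc] := tc _ _ _ hu.
exists (Ordinal (hu' : (u' < T.+1)%N)) => /=.
rewrite (accepts_ext C (c2 := ext_coins c)) // => s i hs hi.
by rewrite ext_restr // (leq_trans hs) // -ltnS.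
Qed.

Lemma acc_prob_tc x T : time_complexity C (fun _ => T.+1) ->
  acc_prob C R x = acc_within C R x T.
Proof. by move=> tc; rewrite /acc_prob; apply: sup_max; apply: acc_within_tc. Qed.

End Mono.

End MB.
Import MB.

Module MD.
Set Implicit Arguments. Unset Strict Implicit. Unset Printing Implicit Defensive.

Lemma divmod_uniq kk t t' j j' : (j < kk)%N -> (j' < kk)%N ->
  (t * kk + j = t' * kk + j')%N -> t = t' /\ j = j'.
Proof.
move=> hj hj' E; have kp : (0 < kk)%N by case: kk hj {hj' E}.
have Ed := congr1 (divn^~ kk) E; rewrite /= !divnMDl // !divn_small // !addn0 in Ed.
by move: E; rewrite Ed => /addnI.
Qed.

Section Amp.
Variables (Sigma : finType) (C : PACA Sigma) (k S : nat).
Notation kk := k.+1.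

Local Notation Pat := {ffun 'I_kk -> option 'I_S.+1}.
Definition P1 := (kk * S)%N.
Definition NP := size (enum Pat).
Definition NN := (P1 + NP)%N.
Local Notation HT := {ffun 'I_kk * 'I_S.+1 -> st C}.
Local Notation ST := ('I_NN.+1 * HT)%type.
Definition pat0 : Pat := [ffun _ => None].
Definition pat (r : nat) : Pat := nth pat0 (enum Pat) r.

Definition majb (pi : Pat) : bool := (kk < 2 * #|[pred j | pi j != None]|)%N.
Definition okp (pi : Pat) (h : HT) : bool :=
  majb pi && [forall j, if pi j is Some t then @acc _ C (h (j, t)) else true].
Definition acc' (s : ST) : bool :=
  [&& (P1 <= s.1)%N, (s.1 - P1 < NP)%N & okp (pat (s.1 - P1)) s.2].
Definition nextc (u : 'I_NN.+1) : 'I_NN.+1 := inord (minn u.+1 NN).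
Definition upd (c : bool) (l : option ST) (s : ST) (r : option ST) : HT :=
  let u := nat_of_ord s.1 in
  let j : 'I_kk := inord (u %% kk) in
  let t : 'I_S.+1 := inord (u %/ kk) in
  let t' : 'I_S.+1 := inord (u %/ kk).+1 in
  let nw := @delta _ C c (omap (fun q : ST => q.2 (j, t)) l) (s.2 (j, t))
                      (omap (fun q : ST => q.2 (j, t)) r) in
  [ffun jt => if jt == (j, t') then nw else s.2 jt].
Definition delta' c l (s : ST) r : ST :=
  (nextc s.1, if (nat_of_ord s.1 < P1)%N then upd c l s r else s.2).
Definition inp' (a : Sigma) : ST := (ord0, [ffun _ => @inp _ C a]).
Lemma inp'_inj : injective inp'.
Proof.
move=> a b [] /(congr1 (fun f : HT => f (ord0, ord0))); rewrite !ffunE.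
exact: (@inp_inj _ C).
Qed.
Definition Camp : PACA Sigma := @MkPACA Sigma ST inp' inp'_inj acc' delta'.

Definition cj (cs : nat -> nat -> bool) (j : nat) : nat -> nat -> bool :=
  fun s i => cs (s * kk + j)%N i.

Lemma P1NN : (P1 <= NN)%N. Proof. by rewrite /NN leq_addr. Qed.

Lemma sim x cs u i : (i < size x)%N ->
  exists s : ST, run Camp x cs u i = Some s /\ nat_of_ord s.1 = minn u NN /\
   forall (j : 'I_kk) (t : 'I_S.+1), (t * kk + j < u + kk)%N ->
     run C x (cj cs j) t i = Some (s.2 (j, t)).
Proof.
elim: u i => [|u IH] i hi.
  have [a ha] : exists a, onth x i = Some a.
    case E: (onth x i) => [a|]; first by exists a.
    by have := onthTE x i; rewrite E hi.
  exists (inp' a); split; first by rewrite /= /cfg0 ha.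
  split; first by rewrite /= min0n.
  move=> j t ht; have t0 : nat_of_ord t = 0%N by nia.
  by rewrite t0 /= /cfg0 ha ffunE.
have [s [Es [Hc Hh]]] := IH i hi.
have nb : forall (j : 'I_kk) (t : 'I_S.+1) i', (t * kk + j < u + kk)%N ->
    omap (fun q : ST => q.2 (j, t)) (run Camp x cs u i') = run C x (cj cs j) t i'.
  move=> j t i' ht; case: (ltnP i' (size x)) => hi'.
    by have [s' [-> [_ H']]] := IH i' hi'; rewrite (H' _ _ ht).
  by rewrite !run_out.
eexists; split; first by rewrite /= /step hi Es.
split.
  rewrite /= /nextc inordK; last by rewrite ltnS geq_minr.
  by rewrite Hc; lia.
move=> j t ht /=.
have P1le := P1NN.
case: ifP => hu; last first.
  apply: Hh; have := ltn_ord t; have := ltn_ord j; move: hu; rewrite Hc /P1; nia.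
have uP : (u < P1)%N by move: hu; rewrite Hc; lia.
have uc : nat_of_ord s.1 = u by rewrite Hc; lia.
have kp : (0 < kk)%N by [].
have hdiv : (u %/ kk < S)%N by rewrite ltn_divLR // mulnC.
rewrite ffunE; case: eqP => [[-> ->]|ne].
  rewrite uc.
  set j0 : 'I_kk := inord (u %% kk); set t0 : 'I_S.+1 := inord (u %/ kk).
  have ej : nat_of_ord j0 = u %% kk by rewrite inordK // ltn_pmod.
  have et : nat_of_ord t0 = u %/ kk by rewrite inordK // ltnS ltnW.
  have e1 : nat_of_ord (inord (u %/ kk).+1 : 'I_S.+1) = (u %/ kk).+1 by rewrite inordK.
  have h0 : (t0 * kk + j0 < u + kk)%N by rewrite ej et -(divn_eq u kk) -addn1 leq_add2l.
  have ec : cj cs j0 t0 i = cs u i by rewrite /cj ej et -(divn_eq u kk).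
  rewrite e1 /= /step hi -et (Hh _ _ h0) ec -(nb _ _ _ h0).
  destruct i as [|i']; [reflexivity | rewrite !(nb _ _ _ h0); reflexivity].
apply: Hh.
have : (t * kk + j != u + kk)%N.
  apply/eqP => E; apply: ne.
  have [E1 E2] : t = (u %/ kk).+1 :> nat /\ j = u %% kk :> nat.
    apply: (divmod_uniq (kk := kk)); rewrite ?ltn_pmod //.
    by rewrite E mulSn -addnA -(divn_eq u kk) addnC.
  by rewrite uc; congr (_, _); apply: val_inj; rewrite /= inordK ?ltn_pmod ?ltnS.
by move: ht; rewrite addSn ltnS leq_eqVlt => /orP [/eqP ->|//]; rewrite eqxx.
Qed.


Lemma sim_full x cs u i : (P1 <= u)%N -> (i < size x)%N ->
  exists s : ST, run Camp x cs u i = Some s /\ nat_of_ord s.1 = minn u NN /\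
   forall (j : 'I_kk) (t : 'I_S.+1), run C x (cj cs j) t i = Some (s.2 (j, t)).
Proof.
move=> hu hi; have [s [E1 [E2 E3]]] := @sim x cs u _ hi.
exists s; do 2!split => //; move=> j t; apply: E3.
have := ltn_ord t; have := ltn_ord j; move: hu; rewrite /P1; nia.
Qed.

Definition AccJ x cs (j : 'I_kk) : bool := [exists t : 'I_S.+1, accepts_at C x (cj cs j) t].
Definition Maj x cs : bool := (kk < 2 * #|[pred j | AccJ x cs j]|)%N.

Lemma NP_gt0 : (0 < NP)%N.
Proof. by rewrite /NP -cardE; apply/card_gt0P; exists pat0. Qed.

Lemma acc_maj x cs u : accepts_at Camp x cs u -> Maj x cs.
Proof.
rewrite /accepts_at /allA => /forallP Hall.
case: (posnP (size x)) => hn.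
  rewrite /Maj (eq_card (B := predT)); first by rewrite card_ord; lia.
  move=> j; rewrite /in_mem /= /AccJ; apply/existsP; exists ord0.
  by rewrite /accepts_at /allA hn; apply/forallP => -[].
have := Hall (Ordinal hn); have [s [Es [Hc _]]] := @sim x cs u _ hn.
rewrite /= Es => /and3P [hP1 hNP /andP [hmaj hall]].
have hu : (P1 <= u)%N by move: hP1; rewrite Hc; lia.
rewrite /Maj; apply: (leq_trans hmaj); rewrite leq_mul2l /=.
apply: subset_leq_card; apply/fintype.subsetP => j; rewrite /in_mem /=.
case E: (pat (s.1 - P1) j) => [t|] // _.
apply/existsP; exists t; rewrite /accepts_at /allA; apply/forallP => i.
have [si [Esi [Hci Hhi]]] := @sim_full x cs u _ hu (ltn_ord i).
rewrite Hhi.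
have := Hall i; rewrite Esi => /and3P [_ _ /andP [_ /forallP /(_ j)]].
have -> : si.1 = s.1 by apply: val_inj; rewrite /= Hci Hc.
by rewrite E.
Qed.

Lemma maj_acc x cs : Maj x cs -> exists2 u, (u < NN)%N & accepts_at Camp x cs u.
Proof.
move=> hM.
pose pi : Pat := [ffun j : 'I_kk => [pick t : 'I_S.+1 | accepts_at C x (cj cs j) t]].
have piE j : (pi j != None) = AccJ x cs j.
  rewrite ffunE /AccJ; case: pickP => [t ht|hn]; first by symmetry; apply/existsP; exists t.
  by symmetry; apply/existsP => -[t]; rewrite hn.
have pin : pi \in enum Pat by rewrite mem_enum.
set r := index pi (enum Pat).
have hr : (r < NP)%N by rewrite /NP index_mem.
exists (P1 + r)%N; first by rewrite /NN ltn_add2l.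
rewrite /accepts_at /allA; apply/forallP => i.
have [s [Es [Hc Hh]]] := @sim_full x cs _ _ (leq_addr r P1) (ltn_ord i).
rewrite Es /= /acc' Hc.
have -> : minn (P1 + r) NN = (P1 + r)%N by rewrite /NN; lia.
rewrite leq_addr addKn hr /= /okp /pat nth_index //.
apply/andP; split.
  by rewrite /majb (eq_card (B := [pred j | AccJ x cs j])) // => j; rewrite /in_mem /= piE.
apply/forallP => j; rewrite ffunE; case: pickP => // t ht.
move: ht; rewrite /accepts_at /allA => /forallP /(_ i).
by rewrite Hh.
Qed.

Lemma tc_amp : time_complexity Camp (fun _ => NN).
Proof.
move=> x cs u hacc.
case: (posnP (size x)) => hn.
  exists 0%N; first by rewrite /NN; have := NP_gt0; lia.
  by rewrite /accepts_at /allA hn; apply/forallP => -[].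
exists u => //.
move: hacc; rewrite /accepts_at /allA => /forallP /(_ (Ordinal hn)).
have [s [Es [Hc _]]] := @sim x cs u _ hn.
rewrite /= Es => /and3P [hP1 hNP _].
move: hP1 hNP; rewrite Hc /NN; lia.
Qed.

End Amp.

End MD.
Import MD.

Module ME.
Set Implicit Arguments. Unset Strict Implicit. Unset Printing Implicit Defensive.

Lemma card_curry (K X : finType) (P : pred {ffun K -> {ffun X -> bool}}) :
  #|[pred e : {ffun K * X -> bool} | P [ffun j => [ffun y => e (j, y)]]]| = #|P|.
Proof.
pose cur (e : {ffun K * X -> bool}) : {ffun K -> {ffun X -> bool}} := [ffun j => [ffun y => e (j, y)]].
pose unc (F : {ffun K -> {ffun X -> bool}}) : {ffun K * X -> bool} := [ffun jy => F jy.1 jy.2].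
have K1 : cancel cur unc by move=> e; apply/ffunP => -[j y]; rewrite !ffunE.
have K2 : cancel unc cur by move=> F; apply/ffunP => j; apply/ffunP => y; rewrite !ffunE.
rewrite -(card_image (can_inj K1) [pred e | P (cur e)]).
apply: eq_card => F; apply/fintype.imageP/idP => [[e he ->] //|hF].
by exists (unc F); rewrite // /in_mem /= K2.
Qed.

Lemma card_maj (K Y : finType) (G : pred Y) (M : pred {ffun K -> bool}) :
  #|[pred F : {ffun K -> Y} | M [ffun j => G (F j)]]| =
  (\sum_(b | M b) \prod_j (if b j then #|G| else #|[predC G]|))%N.
Proof.
rewrite -[LHS]sum1_card (partition_big (I := {ffun K -> Y}) (J := {ffun K -> bool})
   (fun F : {ffun K -> Y} => [ffun j => G (F j)]) M) //=.
apply: eq_bigr => b Mb.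
pose Fm (j : K) : pred Y := [pred y | G y == b j].
transitivity #|family Fm|.
  rewrite -sum1_card; apply: eq_bigl => F.
  apply/andP/familyP => [[_ /eqP Hb] j|H].
    by rewrite /Fm /in_mem /= -Hb ffunE.
  have E : [ffun j => G (F j)] = b.
    by apply/ffunP => j; have := H j; rewrite /Fm /in_mem /= ffunE => /eqP.
  by split; [rewrite /in_mem /= E | rewrite E].
rewrite card_family foldrE big_map big_enum /=; apply: eq_bigr => j _.
by rewrite /Fm; case: (b j); apply: eq_card => y; rewrite /in_mem /= ?eqb_id ?eqbF_neg.
Qed.

End ME.
Import ME.

Module MF.
Set Implicit Arguments. Unset Strict Implicit. Unset Printing Implicit Defensive.
Local Open Scope ring_scope.

Section Count.
Variables (Sigma : finType) (C : PACA Sigma) (k S : nat) (R : realType).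
Notation kk := k.+1.
Variable x : seq Sigma.
Notation n := (size x).

Lemma gidx_lt t (h : (P1 k S <= t)%N) (j : 'I_kk) (s : 'I_S) : (s * kk + j < t)%N.
Proof. have := ltn_ord s; have := ltn_ord j; move: h; rewrite /P1; nia. Qed.

Definition gidx t (h : (P1 k S <= t)%N) (e : 'I_kk * ('I_S * 'I_n)) : 'I_t * 'I_n :=
  (Ordinal (gidx_lt h e.1 e.2.1), e.2.2).

Lemma gidx_inj t h : injective (@gidx t h).
Proof.
move=> [j [s i]] [j' [s' i']] [] /= E ->.
have [E1 E2] := divmod_uniq (ltn_ord j) (ltn_ord j') E.
by congr (_, (_, _)); apply: val_inj.
Qed.

Definition Qm (e : {ffun 'I_kk * ('I_S * 'I_n) -> bool}) : bool :=
  (kk < 2 * #|[pred j | good_coins C (x:=x) (t:=S) [ffun y => e (j, y)]]|)%N.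

Lemma Maj_restr t (h : (P1 k S <= t)%N) (c : {ffun 'I_t * 'I_n -> bool}) :
  Maj C k S x (ext_coins c) = Qm [ffun e => c (gidx h e)].
Proof.
rewrite /Maj /Qm; congr (_ < 2 * _)%N; apply: eq_card => j; rewrite /in_mem /=.
rewrite /AccJ /good_coins; apply: eq_existsb => t'.
apply: accepts_ext => s i hs hi.
have hsS : (s < S)%N by apply: (leq_trans hs); rewrite -ltnS.
rewrite (ext_coinsE _ hsS hi) !ffunE /cj.
rewrite (ext_coinsE _ (gidx_lt h j (Ordinal hsS)) hi).
by congr (c (_, _)); apply: val_inj.
Qed.

Notation G := #|good_coins C (x:=x) (t:=S)|.

Lemma cardQm : #|Qm| =
  (\sum_(b : {ffun 'I_kk -> bool} | (kk < 2 * #|[pred j | b j]|)%N)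
     \prod_j (if b j then G else 2 ^ (S * n) - G))%N.
Proof.
have -> : #|Qm| = #|[pred e : {ffun 'I_kk * ('I_S * 'I_n) -> bool} |
     (kk < 2 * #|[pred j | good_coins C (x:=x) (t:=S)
        ([ffun j => [ffun y => e (j, y)]] j)]|)%N]|.
  by apply: eq_card => e; rewrite /in_mem /= /Qm; congr (_ < 2 * _)%N; apply: eq_card => j; rewrite /in_mem /= ffunE.
rewrite (card_curry (fun F : {ffun 'I_kk -> {ffun 'I_S * 'I_n -> bool}} =>
     (kk < 2 * #|[pred j | good_coins C (x:=x) (t:=S) (F j)]|)%N)).
transitivity #|[pred F : {ffun 'I_kk -> {ffun 'I_S * 'I_n -> bool}} |
   (fun b : {ffun 'I_kk -> bool} => (kk < 2 * #|[pred j | b j]|)%N)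
   [ffun j => good_coins C (x:=x) (t:=S) (F j)]]|.
  apply: eq_card => F; rewrite /in_mem /=; congr (_ < 2 * _)%N.
  by apply: eq_card => j; rewrite /in_mem /= ffunE.
etransitivity; first exact: (card_maj (good_coins C (x:=x) (t:=S)) (fun b : {ffun 'I_kk -> bool} => (kk < 2 * #|[pred j | b j]|)%N)).
apply: eq_bigr => b _; apply: eq_bigr => j _; case: (b j) => //.
have hT : #|{ffun 'I_S * 'I_n -> bool}| = (2 ^ (S * n))%N.
  by rewrite card_ffun card_prod !card_ord card_bool.
by rewrite -hT -(cardC (good_coins C (x:=x) (t:=S))) addKn.
Qed.

Definition fmaj (q : R) : R :=
  \sum_(b : {ffun 'I_kk -> bool} | (kk < 2 * #|[pred j | b j]|)%N)
     \prod_(j : 'I_kk) (if b j then q else 1 - q).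

Lemma G_le : (G <= 2 ^ (S * n))%N.
Proof.
have <- : #|{ffun 'I_S * 'I_n -> bool}| = (2 ^ (S * n))%N.
  by rewrite card_ffun card_prod !card_ord card_bool.
exact: max_card.
Qed.

Lemma cardQm_R : (#|Qm|%:R / (2 ^ (kk * (S * n)))%:R : R) = fmaj (acc_within C R x S).
Proof.
rewrite cardQm natr_sum mulr_suml /fmaj; apply: eq_bigr => b _.
have -> : (2 ^ (kk * (S * n)))%:R = \prod_(j : 'I_kk) (2 ^ (S * n))%:R :> R.
  by rewrite -natr_prod prod_nat_const card_ord -expnM mulnC.
rewrite natr_prod -prodf_div; apply: eq_bigr => j _; rewrite /acc_within.
case: (b j) => //.
have h2 : (2 ^ (S * n))%:R != 0 :> R by rewrite pnatr_eq0 expn_eq0.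
by rewrite natrB ?G_le // mulrBl divff.
Qed.

Lemma acc_amp_le t : (P1 k S <= t)%N ->
  acc_within (Camp C k S) R x t <= fmaj (acc_within C R x S).
Proof.
move=> h; rewrite -cardQm_R /acc_within.
have hA : (kk * (S * n) <= t * n)%N by move: h; rewrite /P1 mulnA leq_mul2r => ->; rewrite orbT.
rewrite -(frac_eq R _ (kk * (S * n)) (t * n - kk * (S * n))) subnKC //.
rewrite ler_wpM2r ?invr_ge0 ?ler0n // ler_nat.
have -> : (#|Qm| * 2 ^ (t * n - kk * (S * n)))%N =
    #|[pred c : {ffun 'I_t * 'I_n -> bool} | Qm [ffun e => c (gidx h e)]]|.
  by rewrite card_marg ?card_prod ?card_ord //; apply: gidx_inj.
apply: subset_leq_card; apply/fintype.subsetP => c; rewrite /in_mem /= /good_coins.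
move=> /existsP [u hu]; rewrite -(Maj_restr h); exact: acc_maj hu.
Qed.

Lemma acc_amp_eq : acc_within (Camp C k S) R x (NN k S) = fmaj (acc_within C R x S).
Proof.
have h : (P1 k S <= NN k S)%N by apply: P1NN.
apply/le_anti/andP; split; first exact: acc_amp_le.
rewrite -cardQm_R /acc_within.
have hA : (kk * (S * n) <= NN k S * n)%N by move: h; rewrite /P1 mulnA leq_mul2r => ->; rewrite orbT.
rewrite -(frac_eq R _ (kk * (S * n)) (NN k S * n - kk * (S * n))) subnKC //.
rewrite ler_wpM2r ?invr_ge0 ?ler0n // ler_nat.
have -> : (#|Qm| * 2 ^ (NN k S * n - kk * (S * n)))%N =
    #|[pred c : {ffun 'I_(NN k S) * 'I_n -> bool} | Qm [ffun e => c (gidx h e)]]|.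
  by rewrite card_marg ?card_prod ?card_ord //; apply: gidx_inj.
apply: subset_leq_card; apply/fintype.subsetP => c; rewrite /in_mem /= /good_coins.
rewrite -(Maj_restr h) => /maj_acc [u hu hacc]; apply/existsP.
by exists (Ordinal (ltnW hu : (u < (NN k S).+1)%N)).
Qed.

End Count.

End MF.
Import MF.

Module MG.
Set Implicit Arguments. Unset Strict Implicit. Unset Printing Implicit Defensive.
Local Open Scope ring_scope.

Section Prob.
Variable R : realType.

Lemma tb (q : R) (m a c : nat) : 0 <= q -> q <= 1 - q ->
  (a + c = (2 * m).+1)%N -> (m < a)%N -> q ^+ a * (1 - q) ^+ c <= (q * (1 - q)) ^+ m.
Proof.
move=> q0 qh hac hma.
pose e := (m - c)%N.
have -> : a = (c + (e + e).+1)%N by rewrite /e; lia.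
have -> : m = (c + e)%N by rewrite /e; lia.
have q1 : 0 <= 1 - q by lra.
rewrite exprMn !exprD.
have -> : q ^+ c * q ^+ (e + e).+1 * (1 - q) ^+ c =
   (q ^+ c * (1 - q) ^+ c) * (q ^+ e * (q ^+ e * q)) by rewrite exprS exprD; ring.
have -> : q ^+ c * q ^+ e * ((1 - q) ^+ c * (1 - q) ^+ e) =
   (q ^+ c * (1 - q) ^+ c) * (q ^+ e * (1 - q) ^+ e) by ring.
apply: ler_wpM2l; first by rewrite mulr_ge0 // exprn_ge0.
apply: ler_wpM2l; first by rewrite exprn_ge0.
apply: (@le_trans _ _ (q ^+ e)).
  by rewrite ler_piMr ?exprn_ge0 //; lra.
by apply: lerXn2r; rewrite ?inE //; lra.
Qed.

Variable m : nat.
Notation kk := (2 * m).+1%N.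

Lemma prod_pow (b : {ffun 'I_kk -> bool}) (q : R) :
  \prod_(j : 'I_kk) (if b j then q else 1 - q) =
  q ^+ #|[pred j | b j]| * (1 - q) ^+ #|[pred j | ~~ b j]|.
Proof.
rewrite (bigID (fun j => b j)) /=; congr (_ * _).
  by rewrite -prodr_const; apply: eq_big => // j ->.
by rewrite -prodr_const; apply: eq_big => // j /negbTE ->.
Qed.

Lemma card_tf (b : {ffun 'I_kk -> bool}) :
  (#|[pred j | b j]| + #|[pred j | ~~ b j]| = kk)%N.
Proof. by rewrite (cardC [pred j | b j]) card_ord. Qed.

Lemma sum_all (q : R) :
  \sum_(b : {ffun 'I_kk -> bool}) \prod_(j : 'I_kk) (if b j then q else 1 - q) = 1.
Proof.
rewrite -(bigA_distr_bigA (fun (j : 'I_kk) (bb : bool) => if bb then q else 1 - q)) /=.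
by apply: big1 => j _; rewrite big_bool /=; ring.
Qed.

Lemma sum_bound (P : pred {ffun 'I_kk -> bool}) (q : R) (B : R) :
  0 <= B -> (forall b, P b -> \prod_(j : 'I_kk) (if b j then q else 1 - q) <= B) ->
  \sum_(b | P b) \prod_(j : 'I_kk) (if b j then q else 1 - q) <= 2 ^+ kk * B.
Proof.
move=> B0 H; apply: (@le_trans _ _ (\sum_(b : {ffun 'I_kk -> bool} | P b) B)).
  exact: ler_sum.
apply: (@le_trans _ _ (\sum_(b : {ffun 'I_kk -> bool}) B)).
  by rewrite [leRHS](bigID P) /= lerDl sumr_ge0.
have hc : #|(xpredT : pred {ffun 'I_kk -> bool})| = (2 ^ kk)%N by rewrite card_ffun card_bool card_ord.
by rewrite sumr_const hc -[B *+ _]mulr_natl natrX.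
Qed.

Lemma fmaj_le (q : R) : 0 <= q -> q <= 1 - q ->
  fmaj (2 * m) q <= 2 ^+ kk * (q * (1 - q)) ^+ m.
Proof.
move=> q0 qh; apply: sum_bound; first by rewrite exprn_ge0 // mulr_ge0 //; lra.
move=> b hb; rewrite prod_pow; apply: tb => //; first exact: card_tf.
by move: hb; lia.
Qed.

Lemma fmaj_ge (q : R) : 0 <= 1 - q -> 1 - q <= q ->
  1 - 2 ^+ kk * (q * (1 - q)) ^+ m <= fmaj (2 * m) q.
Proof.
move=> q0 qh.
have := sum_all q; rewrite (bigID (fun b : {ffun 'I_kk -> bool} => (kk < 2 * #|[pred j | b j]|)%N)) /=.
rewrite -/(fmaj (2 * m) q) => E.
have : \sum_(b : {ffun 'I_kk -> bool} | ~~ (kk < 2 * #|[pred j : 'I_kk | b j]|)%N) \prod_(j : 'I_kk) (if b j then q else 1 - q)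
   <= 2 ^+ kk * (q * (1 - q)) ^+ m.
  apply: sum_bound; first by rewrite exprn_ge0 // mulr_ge0 //; lra.
  move=> b /= hb; rewrite prod_pow mulrC.
  have hac : (#|[pred j | ~~ b j]| + #|[pred j | b j]| = (2 * m).+1)%N.
    by rewrite addnC; exact: card_tf.
  have hb' : (2 * #|[pred j | b j]| <= (2 * m).+1)%N by rewrite leqNgt.
  have hm : (m < #|[pred j | ~~ b j]|)%N by have := card_tf b; move: hb'; lia.
  have h := @tb (1 - q) m _ _ q0 ltac:(lra) hac hm.
  have e : 1 - (1 - q) = q by ring.
  by rewrite e [X in _ <= X ^+ _]mulrC in h.
lra.
Qed.

End Prob.

Lemma bernoulli (R : realType) (d : R) (n : nat) : 0 <= d -> 1 + n%:R * d <= (1 + d) ^+ n.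
Proof.
move=> d0; elim: n => [|n IH]; first by rewrite mul0r addr0 expr0.
rewrite exprS -[n.+1]addn1 natrD.
have h1 : 0 <= 1 + d by lra.
apply: (@le_trans _ _ ((1 + d) * (1 + n%:R * d))); last by apply: ler_wpM2l.
have : 0 <= n%:R * d * d by rewrite !mulr_ge0 // ler0n.
lra.
Qed.

Lemma choose_m (R : realType) (p p' : R) : 0 < p' -> 0 < p -> p < 1 / 2 ->
  exists m : nat, 2 ^+ (2 * m).+1 * (p * (1 - p)) ^+ m <= p'.
Proof.
move=> hp' hp hp2.
pose r := 4 * (p * (1 - p)).
have r0 : 0 < r by rewrite /r; nra.
have r1 : r < 1 by rewrite /r; nra.
pose d := r^-1 - 1.
have d0 : 0 < d by rewrite /d subr_gt0 invf_gt1.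
pose y := 2 / (p' * d).
have y0 : 0 <= y by rewrite /y divr_ge0 // mulr_ge0 // ltW.
exists (Num.bound y).
set M := Num.bound y.
have hM : y < M%:R by apply: archi_boundP.
have hB := bernoulli M (ltW d0).
have h1d : 1 + d = r^-1 by rewrite /d; ring.
rewrite h1d exprVn in hB.
have rM0 : 0 < r ^+ M by apply: exprn_gt0.
have hX : r ^+ M * (1 + M%:R * d) <= 1.
  have := ler_wpM2l (ltW rM0) hB; rewrite mulfV //; exact: lt0r_neq0.
have hY : 2 < p' * (M%:R * d).
  have : y * (p' * d) = 2 by rewrite /y mulfVK // mulf_neq0 // lt0r_neq0.
  have pd : 0 < p' * d by apply: mulr_gt0.
  move=> E; set Mr := M%:R in hM *; nra.
have -> : 2 ^+ (2 * M).+1 * (p * (1 - p)) ^+ M = 2 * r ^+ M.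
  by rewrite /r exprS exprM -mulrA -exprMn; congr (_ * (_ ^+ _)); ring.
set X := r ^+ M in rM0 hX *; set Y := M%:R * d in hX hY *.
nra.
Qed.

End MG.
Import MG.

Module MH.
Local Open Scope ring_scope.

Lemma acc_within_01 (Sigma : finType) (C : PACA Sigma) (R : realType) x t :
  0 <= acc_within C R x t <= 1.
Proof.
rewrite /acc_within divr_ge0 ?ler0n //=.
have h2 : (0 : R) < (2 ^ (t * size x))%:R by rewrite ltr0n expn_gt0.
rewrite ler_pdivrMr // mul1r ler_nat.
have <- : #|{ffun 'I_t * 'I_(size x) -> bool}| = (2 ^ (t * size x))%N.
  by rewrite card_ffun card_prod !card_ord card_bool.
exact: max_card.
Qed.


End MH.
Import MH.

Local Open Scope ring_scope.

Theorem mainTheorem7 (Sigma : finType) (R : realType) (p p' : R) :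
  0 < p' -> p' < p -> p < 1 / 2 ->
  forall (C : PACA Sigma) (L : seq Sigma -> Prop) (T : nat),
    two_sided C p L -> time_complexity C (fun _ => T) ->
    exists (C' : PACA Sigma) (K : nat),
      two_sided C' p' L /\ time_complexity C' (fun _ => (K * T)%N).
Proof.
move=> hp' hpp hp2 C L T hts htc.
have [S eT] : exists S, T = S.+1.
  case: T htc {hts} => [|S] htc; last by exists S.
  have [t' ht' _] := htc [::] (fun _ _ => false) 0%N
     ltac:(by rewrite /accepts_at /allA; apply/forallP => -[]).
  by [].
subst T.
have hp0 : 0 < p by apply: lt_trans hpp.
have [m hm] := choose_m hp' hp0 hp2.
exists (Camp C (2 * m) S), (NN (2 * m) S); split; last first.
  move=> x cs u hacc; have [t' ht' hacc'] := tc_amp hacc.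
  exists t' => //; apply: (leq_trans ht'); rewrite leq_pmulr //.
move=> x.
have hq := acc_prob_tc R x htc.
set q := acc_within C R x S in hq.
have [q0 q1] := andP (acc_within_01 _ C R x S).
move: q0 q1; rewrite -/q => q0 q1.
have hf : acc_prob (Camp C (2 * m) S) R x = fmaj (2 * m) q.
  rewrite /acc_prob -(acc_amp_eq C (2 * m) S R x).
  apply: sup_max => t; rewrite acc_amp_eq.
  case: (leqP (P1 (2 * m) S) t) => h; first exact: acc_amp_le.
  apply: le_trans (acc_amp_le C R x (leqnn _)).
  exact: acc_within_mono (ltnW h).
rewrite hf.
have [hL hnL] := hts x; rewrite hq -/q in hL hnL.
have pp0 : 0 <= p * (1 - p) by rewrite mulr_ge0 //; lra.
have [Lx|nLx] := pselect (L x).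
  have qh : 1 - p <= q by apply/hL.
  have hlow : 1 - 2 ^+ (2 * m).+1 * (q * (1 - q)) ^+ m <= fmaj (2 * m) q.
    by apply: fmaj_ge; lra.
  have hqq : (q * (1 - q)) ^+ m <= (p * (1 - p)) ^+ m.
    have e1 : 0 <= q * (1 - q) by nra.
    apply: lerXn2r; rewrite ?nnegrE //; nra.
  have h2 : (0 : R) <= 2 ^+ (2 * m).+1 by rewrite exprn_ge0.
  have := ler_wpM2l h2 hqq => hh.
  have hf1 : 1 - p' <= fmaj (2 * m) q by lra.
  split; split.
  - by move=> _.
  - by move=> _.
  - by move=> H; exfalso; apply: H.
  - by move=> H; exfalso; lra.
have qh : q <= p by apply/hnL.
have hup : fmaj (2 * m) q <= 2 ^+ (2 * m).+1 * (q * (1 - q)) ^+ m.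
  by apply: fmaj_le => //; lra.
have hqq : (q * (1 - q)) ^+ m <= (p * (1 - p)) ^+ m.
  have e1 : 0 <= q * (1 - q) by nra.
  apply: lerXn2r; rewrite ?nnegrE //; nra.
have h2 : (0 : R) <= 2 ^+ (2 * m).+1 by rewrite exprn_ge0.
have := ler_wpM2l h2 hqq => hh.
have hf1 : fmaj (2 * m) q <= p' by lra.
split; split.
- by move=> H; exfalso; apply: nLx.
- by move=> H; exfalso; lra.
- by move=> _.
- by move=> _.
Qed.
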